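(* Assume the setting of the context. Fix $\widehat x^k$, $\delta_k>0$, points $x^1,\dots,x^{N_k}\in\mathcal{B}(\widehat x^k,\delta_k)$, realizations $\epsilon^1,\dots,\epsilon^{N_k}$ of $\tilde\epsilon$, and $\omega^i=\psi(x^i)+\epsilon^i$. Let $\widehat B^{k,1}\in\mathbb{R}^{n\times d}$, $\widehat B^{k,0}\in\mathbb{R}^{1\times d}$ be the least-squares coefficients, and let $$E_k:=\max_{z\in\mathcal{B}(\widehat x^k,\delta_k)}\big\|\psi(z)-(\widehat B^{k,1})^\top z-(\widehat B^{k,0})^\top\big\|.$$ For $x\in\mathcal{B}(\widehat x^k,\delta_k)$ define $y^{s,*}(x)=\arg\max_{y\in\mathcal{Y}}\frac1{N_k}\sum_{i}l(x,y,\psi(x)+\epsilon^i)$, $$\xi_k(x)=\frac1{N_k}\sum_{i}\nabla_y l(x,y^*(x),\psi(x)+\epsilon^i)-\mathbb{E}_{\tilde\epsilon}\big[\nabla_y l(x,y^*(x),\psi(x)+\tilde\epsilon)\big],$$ $$\tau_k(x)=\mathbb{E}_{\tilde\epsilon}\big[l(x,y^*(x),\psi(x)+\tilde\epsilon)\big]-\frac1{N_k}\sum_i l(x,y^*(x),\psi(x)+\epsilon^i).$$ Then for every $x\in\mathcal{B}(\widehat x^k,\delta_k)$: (a) $\|y^*(x)-y^{s,*}(x)\|\le\frac1\mu\|\xi_k(x)\|$; (b) $\|y^{k,*}(x)-y^{s,*}(x)\|\le\frac{2\ell_1}{\mu}E_k$; (c) $|\Phi(x)-\Phi^k(x)|\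le|\tau_k(x)|+\frac{L_1}{\mu}\|\xi_k(x)\|+2L_1\big(1+\frac{\ell_1}{\mu}\big)E_k$.
   Context: Standing assumptions: $l:\mathbb{R}^n\times\mathbb{R}^m\times\mathbb{R}^d\to\mathbb{R}$ is $\ell_1$-smooth (gradient $\ell_1$-Lipschitz) and $L_1$-Lipschitz; $\psi:\mathbb{R}^n\to\mathbb{R}^d$ is twice differentiable, $\ell_0$-smooth and $L_0$-Lipschitz; $\mathcal{Y}\subset\mathbb{R}^m$ is nonempty, closed, convex, bounded; $l(x,\cdot,z)$ is $\mu$-strongly concave on $\mathcal{Y}$ for all $(x,z)$; $\tilde\epsilon$ is a random vector in $\mathbb{R}^d$ with compact support and zero mean. $\mathcal{L}(x,y)=\mathbb{E}_{\tilde\epsilon}[l(x,y,\psi(x)+\tilde\epsilon)]$, $\Phi(x)=\max_{y\in\mathcal{Y}}\mathcal{L}(x,y)$, $y^*(x)=\arg\max_{y\in\mathcal{Y}}\mathcal{L}(x,y)$. $\mathcal{B}(x,\delta)=\{z:\|z-x\|\le\delta\}$. Least-squares coefficients: $(\widehat B^{k,0},\widehat B^{k,1})$ minimize $\sum_i\|\omega^i-(B^1)^\top x^i-(B^0)^\top\|^2$; residuals $e^{k,i}=\omega^i-(\widehat B^{k,1})^\top x^i-(\widehat B^{k,0})^\top$; $m_k(x,e)=(\widehat B^{k,1})^\top x+(\widehat B^{k,0})^\top+e$; $\mathcal{L}^k(x,y)=\frac1{N_k}\sum_i l(x,y,m_k(x,e^{k,i}))$; $\Phi^k(x)=\max_{y\in\mathcal{Y}}\mathcal{L}^k(x,y)$;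 $y^{k,*}(x)=\arg\max_{y\in\mathcal{Y}}\mathcal{L}^k(x,y)$. *)

(* Defs.v *)
From HB Require Import structures.
From mathcomp Require Import all_boot all_order all_algebra.
From mathcomp Require Import all_classical all_reals all_analysis.
Set Implicit Arguments. Unset Strict Implicit. Unset Printing Implicit Defensive.
Import Order.TTheory GRing.Theory Num.Theory.
Import numFieldNormedType.Exports.
Local Open Scope classical_set_scope.
Local Open Scope ring_scope.

(* Vectors of R^k are row vectors 'rV[R]_k; norms below are EUCLIDEAN. *)
Section Defs.
Variable R : realType.

Definition dotv k (u v : 'rV[R]_k) : R := \sum_(j < k) u 0 j * v 0 j.
Definition enorm k (u : 'rV[R]_k) : R := Num.sqrt (dotv u u).
Definition enorm3 n m d (x : 'rV[R]_n) (y : 'rV[R]_m) (z : 'rV[R]_d) : R :=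
  Num.sqrt (enorm x ^+ 2 + enorm y ^+ 2 + enorm z ^+ 2).

Definition eball k (c : 'rV[R]_k) (r : R) : set 'rV[R]_k :=
  [set z | enorm (z - c) <= r].

Definition grad k (f : 'rV[R]_k -> R) (a : 'rV[R]_k) : 'rV[R]_k :=
  \row_(j < k) derive f a (delta_mx 0 j).

Section L.
Variables (n m d : nat) (l : 'rV[R]_n -> 'rV[R]_m -> 'rV[R]_d -> R).
Definition gradX x y z := grad (fun x' => l x' y z) x.
Definition gradY x y z := grad (fun y' => l x y' z) y.
Definition gradZ x y z := grad (fun z' => l x y z') z.

Definition smooth_l (ell1 : R) :=
  (forall p : 'rV[R]_n * 'rV[R]_m * 'rV[R]_d,
      differentiable (fun q : 'rV[R]_n * 'rV[R]_m * 'rV[R]_d => l q.1.1 q.1.2 q.2) p) /\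
  (forall x y z x' y' z',
      enorm3 (gradX x y z - gradX x' y' z') (gradY x y z - gradY x' y' z')
             (gradZ x y z - gradZ x' y' z')
      <= ell1 * enorm3 (x - x') (y - y') (z - z')).

Definition lipschitz_l (L1 : R) :=
  forall x y z x' y' z', `|l x y z - l x' y' z'| <= L1 * enorm3 (x - x') (y - y') (z - z').

Definition strongly_concave_l (Y : set 'rV[R]_m) (mu : R) :=
  forall x z y1 y2 t, Y y1 -> Y y2 -> 0 <= t <= 1 ->
    t * l x y1 z + (1 - t) * l x y2 z + mu / 2 * t * (1 - t) * enorm (y1 - y2) ^+ 2
    <= l x (t *: y1 + (1 - t) *: y2) z.
End L.

Section Psi.
Variables (n d : nat) (psi : 'rV[R]_n -> 'rV[R]_d).
Definition twice_differentiable :=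
  (forall x, differentiable psi x) /\
  (forall (j : 'I_n) x, differentiable (fun x' => derive psi x' (delta_mx 0 j)) x).
Definition smooth_psi (ell0 : R) :=
  forall x x' h, enorm (derive psi x h - derive psi x' h) <= ell0 * enorm (x - x') * enorm h.
Definition lipschitz_psi (L0 : R) :=
  forall x x', enorm (psi x - psi x') <= L0 * enorm (x - x').
End Psi.

Definition is_argmax k (Y : set 'rV[R]_k) (f : 'rV[R]_k -> R) (y : 'rV[R]_k) :=
  Y y /\ forall y', Y y' -> f y' <= f y.

Section Prob.
Variables (dT : measure_display) (T : measurableType dT) (P : probability T R).
Definition Ex (f : T -> R) : R := Rintegral P setT f.
Definition Exv k (F : T -> 'rV[R]_k) : 'rV[R]_k := \row_(j < k) Ex (fun w => F w 0 j).

Definition random_vector_cs0 k (eps : T -> 'rV[R]_k) :=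
  (forall j : 'I_k, measurable_fun setT (fun w => eps w 0 j)) /\
  (exists K : set 'rV[R]_k, compact K /\ {ae P, forall w, K (eps w)}) /\
  (forall j : 'I_k, P.-integrable setT (fun w => (eps w 0 j)%:E) /\
                    Ex (fun w => eps w 0 j) = 0).
End Prob.

End Defs.

Section Problem.
Variable R : realType.
Variables (n m d : nat) (l : 'rV[R]_n -> 'rV[R]_m -> 'rV[R]_d -> R)
          (psi : 'rV[R]_n -> 'rV[R]_d) (Y : set 'rV[R]_m).

Definition Lpop dT (T : measurableType dT) (P : probability T R) (eps : T -> 'rV[R]_d)
  (x : 'rV[R]_n) (y : 'rV[R]_m) : R := Ex P (fun w => l x y (psi x + eps w)).
Definition Phi dT (T : measurableType dT) (P : probability T R) (eps : T -> 'rV[R]_d)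
  (x : 'rV[R]_n) : R := sup [set Lpop P eps x y | y in Y].

Variables (N : nat) (xs : 'I_N -> 'rV[R]_n) (es : 'I_N -> 'rV[R]_d).
Definition omega (i : 'I_N) : 'rV[R]_d := psi (xs i) + es i.
(* least-squares objective; row-vector convention: (B1^T x + B0^T)^T = x *m B1 + B0 *)
Definition lsq_obj (B0 : 'M[R]_(1, d)) (B1 : 'M[R]_(n, d)) : R :=
  \sum_(i < N) enorm (omega i - xs i *m B1 - B0) ^+ 2.
Definition is_lsq (B0 : 'M[R]_(1, d)) (B1 : 'M[R]_(n, d)) :=
  forall C0 C1, lsq_obj B0 B1 <= lsq_obj C0 C1.

Variables (B0 : 'M[R]_(1, d)) (B1 : 'M[R]_(n, d)).
Definition resid (i : 'I_N) : 'rV[R]_d := omega i - xs i *m B1 - B0.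
Definition mk (x : 'rV[R]_n) (e : 'rV[R]_d) : 'rV[R]_d := x *m B1 + B0 + e.
Definition Lk (x : 'rV[R]_n) (y : 'rV[R]_m) : R :=
  (N%:R)^-1 * \sum_(i < N) l x y (mk x (resid i)).
Definition Phik (x : 'rV[R]_n) : R := sup [set Lk x y | y in Y].
Definition Ls (x : 'rV[R]_n) (y : 'rV[R]_m) : R :=
  (N%:R)^-1 * \sum_(i < N) l x y (psi x + es i).
Definition Ek (xhat : 'rV[R]_n) (delta : R) : R :=
  sup [set enorm (psi z - z *m B1 - B0) | z in eball xhat delta].

Definition xi dT (T : measurableType dT) (P : probability T R) (eps : T -> 'rV[R]_d)
  (x : 'rV[R]_n) (ystar : 'rV[R]_m) : 'rV[R]_m :=
  (N%:R)^-1 *: \sum_(i < N) gradY l x ystar (psi x + es i)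
  - Exv P (fun w => gradY l x ystar (psi x + eps w)).
Definition tau dT (T : measurableType dT) (P : probability T R) (eps : T -> 'rV[R]_d)
  (x : 'rV[R]_n) (ystar : 'rV[R]_m) : R :=
  Lpop P eps x ystar - Ls x ystar.
End Problem.

(* Main.v *)
Require Import Defs.
From HB Require Import structures.
From mathcomp Require Import all_boot all_order all_algebra.
From mathcomp Require Import all_classical all_reals all_analysis.
From mathcomp Require Import ring lra measurable_realfun.
Import Order.TTheory GRing.Theory Num.Theory.
Import numFieldNormedType.Exports.
Local Open Scope classical_set_scope.
Local Open Scope ring_scope.

Section Vec.
Context {R : realType}.
Implicit Types (k : nat).

Lemma dotvC {k} (u v : 'rV[R]_k) : dotv u v = dotv v u.
Proof. by apply: eq_bigr => j _; rewrite mulrC. Qed.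

Lemma dotvDl {k} (u v w : 'rV[R]_k) : dotv (u + v) w = dotv u w + dotv v w.
Proof. by rewrite /dotv -big_split; apply: eq_bigr => j _; rewrite mxE mulrDl. Qed.

Lemma dotvZl {k} a (u w : 'rV[R]_k) : dotv (a *: u) w = a * dotv u w.
Proof. by rewrite /dotv mulr_sumr; apply: eq_bigr => j _; rewrite mxE mulrA. Qed.

Lemma dotvNl {k} (u w : 'rV[R]_k) : dotv (- u) w = - dotv u w.
Proof. by rewrite -scaleN1r dotvZl mulN1r. Qed.

Lemma dotvBl {k} (u v w : 'rV[R]_k) : dotv (u - v) w = dotv u w - dotv v w.
Proof. by rewrite dotvDl dotvNl. Qed.

Lemma dotvDr {k} (u v w : 'rV[R]_k) : dotv w (u + v) = dotv w u + dotv w v.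
Proof. by rewrite dotvC dotvDl !(dotvC w). Qed.

Lemma dotvZr {k} a (u w : 'rV[R]_k) : dotv w (a *: u) = a * dotv w u.
Proof. by rewrite dotvC dotvZl dotvC. Qed.

Lemma dotvNr {k} (u w : 'rV[R]_k) : dotv w (- u) = - dotv w u.
Proof. by rewrite dotvC dotvNl dotvC. Qed.

Lemma dotvBr {k} (u v w : 'rV[R]_k) : dotv w (u - v) = dotv w u - dotv w v.
Proof. by rewrite dotvDr dotvNr. Qed.

Lemma dotv0l {k} (w : 'rV[R]_k) : dotv 0 w = 0.
Proof. by rewrite -(scale0r (0 : 'rV[R]_k)) dotvZl mul0r. Qed.

Lemma dotv0r {k} (w : 'rV[R]_k) : dotv w 0 = 0.
Proof. by rewrite dotvC dotv0l. Qed.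

Lemma dotv_suml {k} N (u : 'I_N -> 'rV[R]_k) w :
  dotv (\sum_(i < N) u i) w = \sum_(i < N) dotv (u i) w.
Proof.
elim/big_ind2: _ => //; first by rewrite dotv0l.
by move=> a b c e <- <-; rewrite dotvDl.
Qed.

Lemma dotv_ge0 {k} (u : 'rV[R]_k) : 0 <= dotv u u.
Proof. by apply: sumr_ge0 => j _; rewrite -expr2 sqr_ge0. Qed.

Lemma enorm_ge0 {k} (u : 'rV[R]_k) : 0 <= enorm u.
Proof. exact: sqrtr_ge0. Qed.

Lemma enorm_sq {k} (u : 'rV[R]_k) : enorm u ^+ 2 = dotv u u.
Proof. by rewrite /enorm sqr_sqrtr // dotv_ge0. Qed.

Lemma dotv_eq0 {k} (u : 'rV[R]_k) : dotv u u = 0 -> u = 0.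
Proof.
move=> h; apply/rowP => j; rewrite mxE.
have h0 : forall i : 'I_k, true -> 0 <= u 0 i * u 0 i.
  by move=> i _; rewrite -expr2 sqr_ge0.
have /eqP := psumr_eq0P h0 h (i:=j) isT.
by rewrite mulf_eq0 orbb => /eqP.
Qed.

Lemma enorm_eq0 {k} (u : 'rV[R]_k) : enorm u = 0 -> u = 0.
Proof. by move=> h; apply: dotv_eq0; rewrite -enorm_sq h expr0n. Qed.

Lemma enorm0 {k} : enorm (0 : 'rV[R]_k) = 0.
Proof. by rewrite /enorm dotv0l sqrtr0. Qed.

Lemma CS {k} (u v : 'rV[R]_k) : dotv u v <= enorm u * enorm v.
Proof.
have [a0|a0] := eqVneq (enorm u) 0.
  by rewrite (enorm_eq0 _ a0) dotv0l enorm0 mul0r.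
have [b0|b0] := eqVneq (enorm v) 0.
  by rewrite (enorm_eq0 _ b0) dotv0r enorm0 mulr0.
have ha : 0 < enorm u by rewrite lt_def a0 enorm_ge0.
have hb : 0 < enorm v by rewrite lt_def b0 enorm_ge0.
have := dotv_ge0 (enorm v *: u - enorm u *: v).
rewrite !(dotvBl, dotvBr, dotvZl, dotvZr) -!enorm_sq (dotvC v u).
set a := enorm u; set b := enorm v; set D := dotv u v => h.
have hab : 0 < a * b by exact: mulr_gt0.
have h' : 0 <= (a * b) * (a * b - D).
  have -> : (a * b) * (a * b - D) = (b * (b * a ^+ 2 - a * D) - a * (b * D - a * b ^+ 2)) / 2.
    by field.
  by apply: divr_ge0.
by move: h'; rewrite pmulr_rge0 // subr_ge0.
Qed.

Lemma CSabs {k} (u v : 'rV[R]_k) : `|dotv u v| <= enorm u * enorm v.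
Proof.
rewrite ler_norml CS andbT.
have := CS (- u) v; rewrite dotvNl.
have -> : enorm (- u) = enorm u by rewrite /enorm dotvNl dotvNr opprK.
by rewrite lerNl.
Qed.

Lemma enormN {k} (u : 'rV[R]_k) : enorm (- u) = enorm u.
Proof. by rewrite /enorm dotvNl dotvNr opprK. Qed.

Lemma enormB {k} (u v : 'rV[R]_k) : enorm (u - v) = enorm (v - u).
Proof. by rewrite -enormN opprB. Qed.

Lemma enormD {k} (u v : 'rV[R]_k) : enorm (u + v) <= enorm u + enorm v.
Proof.
rewrite {1}/enorm -(ger0_norm (addr_ge0 (enorm_ge0 u) (enorm_ge0 v))) -sqrtr_sqr.
apply: ler_wsqrtr.
rewrite !(dotvDl, dotvDr) -!enorm_sq (dotvC v u).
have := CS u v; set a := enorm u; set b := enorm v; set D := dotv u v => h.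
nra.
Qed.

Lemma enormZ {k} a (u : 'rV[R]_k) : enorm (a *: u) = `|a| * enorm u.
Proof.
rewrite /enorm dotvZl dotvZr mulrA -expr2 sqrtrM ?sqr_ge0 //.
by rewrite sqrtr_sqr.
Qed.

Lemma enorm_rV0 (u : 'rV[R]_0) : enorm u = 0.
Proof. by rewrite /enorm /dotv big_ord0 sqrtr0. Qed.

Lemma enorm_delta {k} (j : 'I_k) : enorm (delta_mx 0 j : 'rV[R]_k) = 1.
Proof.
rewrite /enorm /dotv (bigD1 j) //= big1 ?addr0.
  by rewrite !mxE !eqxx mulr1 sqrtr1.
by move=> i ij; rewrite !mxE eqxx /= (negbTE ij) mulr0.
Qed.

Lemma enorm_sum {k} N (u : 'I_N -> 'rV[R]_k) :
  enorm (\sum_(i < N) u i) <= \sum_(i < N) enorm (u i).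
Proof.
elim/big_ind2: _ => //; first by rewrite enorm0.
by move=> a b c e h1 h2; apply: (le_trans (enormD _ _)); exact: lerD.
Qed.

Lemma enorm_le_abs {k} (u : 'rV[R]_k) : enorm u <= \sum_(j < k) `|u 0 j|.
Proof.
rewrite {1}(row_sum_delta u); apply: le_trans; first exact: enorm_sum.
by apply: ler_sum => j _; rewrite enormZ enorm_delta mulr1.
Qed.

Lemma enorm_ge_abs {k} (u : 'rV[R]_k) j : `|u 0 j| <= enorm u.
Proof.
rewrite /enorm -sqrtr_sqr; apply: ler_wsqrtr.
rewrite /dotv (bigD1 j) //= expr2 lerDl.
by apply: sumr_ge0 => i _; rewrite -expr2 sqr_ge0.
Qed.

Lemma enorm3_mid {n m d} (x : 'rV[R]_n) (y : 'rV[R]_m) (z : 'rV[R]_d) :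
  enorm y <= enorm3 x y z.
Proof.
rewrite /enorm3 -[X in X <= _](ger0_norm (enorm_ge0 y)) -sqrtr_sqr; apply: ler_wsqrtr.
have := sqr_ge0 (enorm x); have := sqr_ge0 (enorm z); lra.
Qed.

Lemma enorm3_0y0 {n m d} (y : 'rV[R]_m) :
  enorm3 (0 : 'rV[R]_n) y (0 : 'rV[R]_d) = enorm y.
Proof.
by rewrite /enorm3 !enorm0 expr0n /= add0r addr0 sqrtr_sqr ger0_norm // enorm_ge0.
Qed.

Lemma enorm3_00z {n m d} (z : 'rV[R]_d) :
  enorm3 (0 : 'rV[R]_n) (0 : 'rV[R]_m) z = enorm z.
Proof.
by rewrite /enorm3 !enorm0 expr0n /= !add0r sqrtr_sqr ger0_norm // enorm_ge0.
Qed.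

Lemma enorm3_last {n m d} (x : 'rV[R]_n) (y : 'rV[R]_m) (z : 'rV[R]_d) :
  enorm z <= enorm3 x y z.
Proof.
rewrite /enorm3 -[X in X <= _](ger0_norm (enorm_ge0 z)) -sqrtr_sqr; apply: ler_wsqrtr.
have := sqr_ge0 (enorm x); have := sqr_ge0 (enorm y); lra.
Qed.

End Vec.

Section Line.
Variable R : realType.
Variables (n m d : nat) (l : 'rV[R]_n -> 'rV[R]_m -> 'rV[R]_d -> R).
Hypothesis Hd : forall p : 'rV[R]_n * 'rV[R]_m * 'rV[R]_d,
      differentiable (fun q : 'rV[R]_n * 'rV[R]_m * 'rV[R]_d => l q.1.1 q.1.2 q.2) p.

Lemma diffY x z y : differentiable (fun y' => l x y' z) y.
Proof.
have -> : (fun y' => l x y' z) =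
  (fun q : 'rV[R]_n * 'rV[R]_m * 'rV[R]_d => l q.1.1 q.1.2 q.2) \o
  (fun y' => ((x, id y'), z)) by [].
apply: differentiable_comp; last exact: Hd.
apply: differentiable_pair => //.
exact: differentiable_pair.
Qed.

Lemma gradY_dot x z p h :
  derive (fun y' => l x y' z) p h = dotv (gradY l x p z) h.
Proof.
rewrite deriveE; last exact: diffY.
rewrite {1}(row_sum_delta h) linear_sum /dotv.
apply: eq_bigr => j _; rewrite linearZ /= mxE -deriveE; last exact: diffY.
by rewrite mulrC.
Qed.

Lemma line_E1 x z (y h : 'rV[R]_m) (t : R) :
  (fun s : R => s^-1 *: (((fun t' : R => l x (y + t' *: h) z) \o shift t) (s *: 1)
                 - l x (y + t *: h) z)) =
  (fun s : R => s^-1 *: (((fun y' => l x y' z) \o shift (y + t *: h)) (s *: h)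
                 - l x (y + t *: h) z)).
Proof.
apply: funext => s /=; congr (_ *: (l x _ z - _)).
by rewrite [s%:A]mulr1 scalerDl addrCA.
Qed.

Lemma line_derivable x z (y h : 'rV[R]_m) (t : R) :
  derivable (fun t' : R => l x (y + t' *: h) z) t 1.
Proof.
have := @diff_derivable _ _ _ _ _ h (diffY x z (y + t *: h)).
by rewrite /derivable line_E1.
Qed.

Lemma line_derive x z (y h : 'rV[R]_m) (t : R) :
  derive (fun t' : R => l x (y + t' *: h) z) t 1 =
  dotv (gradY l x (y + t *: h) z) h.
Proof. by rewrite -gradY_dot /derive line_E1. Qed.

Lemma line_is_derive x z (y h : 'rV[R]_m) (t : R) :
  is_derive t 1 (fun t' : R => l x (y + t' *: h) z)
     (dotv (gradY l x (y + t *: h) z) h).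
Proof.
rewrite -line_derive; apply: derivableP; exact: line_derivable.
Qed.

Lemma mvt_bound x z c0 : 0 <= c0 ->
  (forall y y', enorm (gradY l x y z - gradY l x y' z) <= c0 * enorm (y - y')) ->
  forall (y h : 'rV[R]_m) (t : R), 0 <= t ->
  `|l x (y + t *: h) z - l x y z - t * dotv (gradY l x y z) h|
     <= c0 * t ^+ 2 * enorm h ^+ 2.
Proof.
move=> c0ge HL y h t t0.
pose f := fun t' : R => l x (y + t' *: h) z.
pose df := fun s : R => dotv (gradY l x (y + s *: h) z) h.
have cont : {within `[0, t], continuous f}.
  by apply: derivable_within_continuous => s _; exact: line_derivable.
have [c cI E] := @MVT_segment R f df 0 t t0 (fun s _ => line_is_derive x z y h s) cont.
have f0 : f 0 = l x y z by rewrite /f scale0r addr0.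
have -> : l x (y + t *: h) z - l x y z - t * dotv (gradY l x y z) h =
          t * dotv (gradY l x (y + c *: h) z - gradY l x y z) h.
  by rewrite -f0 -/(f t) E /df subr0 dotvBl mulrBr mulrC.
move: cI; rewrite in_itv /= => /andP[cge ct].
rewrite normrM ger0_norm //.
have h1 := CSabs (gradY l x (y + c *: h) z - gradY l x y z) h.
have h2 := HL (y + c *: h) y.
rewrite addrAC subrr add0r enormZ ger0_norm // in h2.
have hh := enorm_ge0 h.
have hg := enorm_ge0 (gradY l x (y + c *: h) z - gradY l x y z).
set A := `|_| in h1 *.
set G := enorm (_ - _) in h1 h2 hg.
set H := enorm h in h1 h2 hh *.
have hA : A <= c0 * (c * H) * H by apply: (le_trans h1); apply: ler_wpM2r.
have k1 : t * A <= t * (c0 * (c * H) * H) := ler_wpM2l t0 hA.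
have k2 : c0 * (c * H) * H <= c0 * (t * H) * H.
  by apply: ler_wpM2r => //; apply: ler_wpM2l => //; apply: ler_wpM2r.
have k3 : t * (c0 * (c * H) * H) <= t * (c0 * (t * H) * H) := ler_wpM2l t0 k2.
apply: (le_trans k1); apply: (le_trans k3).
by rewrite le_eqVlt; apply/orP; left; apply/eqP; ring.
Qed.

End Line.

Section Opt.
Context {R : realType}.

Lemma convY m (Y : set 'rV[R]_m) : convex_set Y ->
  forall a b (t : R), Y a -> Y b -> 0 <= t <= 1 -> Y (t *: a + (1 - t) *: b).
Proof.
move=> cY a b t Ya Yb /andP[t0 t1].
have := cY a b (Itv01 t0 t1) (mem_set Ya) (mem_set Yb).
by rewrite inE.
Qed.

Lemma lim0 (a b c : R) : (forall t, 0 < t < 1 -> a <= b + c * t) -> a <= b.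
Proof.
move=> H; rewrite leNgt; apply/negP => ab.
set e := a - b.
have e0 : 0 < e by rewrite subr_gt0.
set t := e / (2 * (`|c| + e)).
have ce : 0 < `|c| + e by apply: ltr_wpDl.
have t0 : 0 < t by apply: divr_gt0 => //; apply: mulr_gt0.
have t1 : t < 1.
  rewrite ltr_pdivrMr; last by apply: mulr_gt0.
  have := normr_ge0 c; lra.
have := H t; rewrite t0 t1 => /(_ isT) h.
have : c * t <= `|c| * t by apply: ler_wpM2r; [exact: ltW|exact: ler_norm].
have : `|c| * t <= e / 2.
  rewrite /t mulrA ler_pdivrMr; last by apply: mulr_gt0.
  have := normr_ge0 c.
  have -> : e / 2 * (2 * (`|c| + e)) = e * (`|c| + e) by field.
  move=> hc; nra.
have eE : e = a - b by [].
lra.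
Qed.

Section Generic.
Variables (m : nat) (Y : set 'rV[R]_m) (F : 'rV[R]_m -> R)
  (G : 'rV[R]_m -> 'rV[R]_m -> R) (c0 mu : R).
Hypothesis cY : convex_set Y.
Hypothesis MV : forall y h t, 0 <= t ->
  `|F (y + t *: h) - F y - t * G y h| <= c0 * t ^+ 2 * enorm h ^+ 2.

Lemma opt_first ys y : is_argmax Y F ys -> Y y -> G ys (y - ys) <= 0.
Proof.
move=> [Yys Hmax] Yy.
set h := y - ys.
apply: (@lim0 _ 0 (c0 * enorm h ^+ 2)) => t /andP[t0 t1].
have Yp : Y (ys + t *: h).
  have -> : ys + t *: h = t *: y + (1 - t) *: ys.
    by apply/rowP => j; rewrite /h !mxE; ring.
  by apply: convY => //; rewrite (ltW t0) (ltW t1).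
have := Hmax _ Yp.
have := MV ys h t (ltW t0).
set A := F (ys + t *: h); set B := F ys; set C := G ys h; set E := enorm h ^+ 2.
move=> /ler_normlP[h1 h2] h3.
have : t * C <= t * (c0 * E * t).
  have -> : t * (c0 * E * t) = c0 * t ^+ 2 * E by ring.
  lra.
by rewrite ler_pM2l // add0r mulrC mulrA.
Qed.

Hypothesis SC : forall y1 y2 t, Y y1 -> Y y2 -> 0 <= t <= 1 ->
  t * F y1 + (1 - t) * F y2 + mu / 2 * t * (1 - t) * enorm (y1 - y2) ^+ 2
    <= F (t *: y1 + (1 - t) *: y2).

Lemma opt_sc ys y : is_argmax Y F ys -> Y y ->
  mu * enorm (ys - y) ^+ 2 <= G y (ys - y).
Proof.
move=> [Yys Hmax] Yy.
set h := ys - y.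
set K := mu / 2 * enorm h ^+ 2.
set D := F ys - F y.
have pE t : t *: ys + (1 - t) *: y = y + t *: h.
  by apply/rowP => j; rewrite /h !mxE; ring.
have i1 : K <= D.
  apply: (@lim0 _ _ K) => s /andP[s0 s1].
  set t := 1 - s.
  have t01 : 0 <= t <= 1 by rewrite /t; apply/andP; split; lra.
  have := SC ys y t Yys Yy t01.
  have := Hmax _ (@convY _ Y cY _ _ _ Yys Yy t01).
  set A := F (t *: ys + (1 - t) *: y).
  move=> hA hS.
  have : s * (K * t - D) <= s * 0.
    have -> : s * 0 = 0 by rewrite mulr0.
    have -> : s * (K * t - D) = t * F ys + (1 - t) * F y + mu / 2 * t * (1 - t) * enorm h ^+ 2 - F ys.
      by rewrite /K /D /t; ring.
    rewrite -/h in hS; lra.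
  rewrite ler_pM2l // => hh.
  have tE : t = 1 - s by [].
  nra.
have i2 : D + K <= G y h.
  apply: (@lim0 _ _ (K + c0 * enorm h ^+ 2)) => t /andP[t0 t1].
  have t01 : 0 <= t <= 1 by rewrite (ltW t0) (ltW t1).
  have := SC ys y t Yys Yy t01.
  have := MV y h t (ltW t0).
  rewrite -pE.
  set A := F (t *: ys + (1 - t) *: y).
  move=> /ler_normlP[h1 h2] hS.
  have : t * (D + K) <= t * (G y h + (K + c0 * enorm h ^+ 2) * t).
    have -> : t * (D + K) = t * F ys + (1 - t) * F y + mu / 2 * t * (1 - t) * enorm h ^+ 2 - F y + K * t ^+ 2.
      by rewrite /K /D; ring.
    have -> : t * (G y h + (K + c0 * enorm h ^+ 2) * t) = t * G y h + c0 * t ^+ 2 * enorm h ^+ 2 + K * t ^+ 2.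
      by ring.
    rewrite -/h in hS; lra.
  by rewrite ler_pM2l.
have -> : mu * enorm h ^+ 2 = K + K by rewrite /K; field.
lra.
Qed.

End Generic.

End Opt.

Section Avg.
Context {R : realType}.
Variables (m N : nat) (f : 'I_N -> 'rV[R]_m -> R) (g : 'I_N -> 'rV[R]_m -> 'rV[R]_m).
Hypothesis N0 : (0 < N)%N.
Let Nr : N%:R != 0 :> R.
Proof. by rewrite pnatr_eq0 -lt0n. Qed.
Let Nr0 : 0 <= (N%:R : R)^-1.
Proof. by rewrite invr_ge0 ler0n. Qed.

Definition avgF y := (N%:R : R)^-1 * \sum_(i < N) f i y.
Definition avgG y h := (N%:R : R)^-1 * \sum_(i < N) dotv (g i y) h.

Lemma avg_const (B : R) : (N%:R : R)^-1 * \sum_(i < N) B = B.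
Proof. by rewrite sumr_const card_ord -[B *+ N]mulr_natr mulrCA mulVf // mulr1. Qed.

Lemma avg_MV (c0 : R) (MV : forall i y h t, 0 <= t ->
  `|f i (y + t *: h) - f i y - t * dotv (g i y) h| <= c0 * t ^+ 2 * enorm h ^+ 2) :
  forall y h t, 0 <= t ->
  `|avgF (y + t *: h) - avgF y - t * avgG y h| <= c0 * t ^+ 2 * enorm h ^+ 2.
Proof.
move=> y h t t0; rewrite /avgF /avgG.
rewrite mulrCA -mulrBr -mulrBr mulr_sumr -!sumrB normrM ger0_norm //.
rewrite -[leRHS](avg_const); apply: ler_wpM2l => //.
apply: (le_trans (ler_norm_sum _ _ _)); apply: ler_sum => i _; exact: MV.
Qed.

Lemma avg_SC (Y : set 'rV[R]_m) (mu : R) (SC : forall i y1 y2 t, Y y1 -> Y y2 -> 0 <= t <= 1 ->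
  t * f i y1 + (1 - t) * f i y2 + mu / 2 * t * (1 - t) * enorm (y1 - y2) ^+ 2
    <= f i (t *: y1 + (1 - t) *: y2)) :
  forall y1 y2 t, Y y1 -> Y y2 -> 0 <= t <= 1 ->
  t * avgF y1 + (1 - t) * avgF y2 + mu / 2 * t * (1 - t) * enorm (y1 - y2) ^+ 2
    <= avgF (t *: y1 + (1 - t) *: y2).
Proof.
move=> y1 y2 t Y1 Y2 t01; rewrite /avgF.
set K := mu / 2 * t * (1 - t) * enorm (y1 - y2) ^+ 2.
rewrite -(avg_const K) !mulrA (mulrC t) (mulrC (1 - t)) -!mulrA -!mulrDr.
apply: ler_wpM2l => //.
rewrite !mulr_sumr -!big_split /=; apply: ler_sum => i _; exact: SC.
Qed.

End Avg.

Section Meas.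
Context {R : realType} (dT : measure_display) (T : measurableType dT)
  (P : probability T R) (d : nat) (eps : T -> 'rV[R]_d).
Hypothesis Hm : forall j : 'I_d, measurable_fun setT (fun w => eps w 0 j).

Definition box (qs : 'rV[rat]_d * rat) : set 'rV[R]_d :=
  [set u | forall j, `|u 0 j - ratr (qs.1 0 j)| < ratr qs.2].

Lemma meas_box qs : measurable (eps @^-1` box qs).
Proof.
pose B (k : nat) : set T := if (insub k : option 'I_d) is Some j then
  (fun w => eps w 0 j) @^-1`
     `](ratr (qs.1 0 j) - ratr qs.2), (ratr (qs.1 0 j) + ratr qs.2)[%classic
  else setT.
have -> : eps @^-1` box qs = \bigcap_(k in setT) B k.
  apply/seteqP; split => w /=.
    move=> hw k _; rewrite /B; case: insubP => // j _ _ /=.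
    rewrite in_itv /=; have := hw j; rewrite ltr_norml => /andP[h1 h2].
    apply/andP; split; lra.
  move=> hw j; have := hw (val j) I; rewrite /B valK /= in_itv /=.
  rewrite ltr_norml => /andP[h1 h2]; apply/andP; split; lra.
apply: bigcap_measurableType => k _; rewrite /B; case: insubP => // j _ _.
by rewrite -[X in measurable X]setTI; apply: Hm => //; exact: measurable_itv.
Qed.

Lemma meas_open (O : set 'rV[R]_d) :
  (forall p, O p -> exists2 e, 0 < e & forall u : 'rV[R]_d, (forall j, `|u 0 j - p 0 j| < e) -> O u) ->
  measurable (eps @^-1` O).
Proof.
move=> HO.
pose F (qs : 'rV[rat]_d * rat) : set T :=
  if pselect (box qs `<=` O) then eps @^-1` box qs else set0.
have -> : eps @^-1` O = \bigcup_qs F qs.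
  apply/seteqP; split => w /=; last first.
    by move=> [qs _]; rewrite /F; case: pselect => // sub /sub.
  move=> /HO[e e0 He].
  have [s] := @rat_in_itvoo R 0 (e / 2) ltac:(by apply: divr_gt0).
  rewrite in_itv /= => /andP[s0 s1].
  have hq : forall j : 'I_d, exists q : rat, ratr q \in `](eps w 0 j - ratr s), (eps w 0 j + ratr s)[.
    by move=> j; apply: rat_in_itvoo; lra.
  have [qf Hq] := choice hq.
  exists (\row_j qf j, s) => //.
  have bx : box (\row_j qf j, s) `<=` O.
    move=> u /= hu; apply: He => j; have := hu j; have := Hq j.
    rewrite mxE in_itv /= => /andP[h1 h2]; rewrite !ltr_norml => /andP[h3 h4].
    apply/andP; split; lra.
  rewrite /F; case: pselect => // _ /= j; have := Hq j.
  by rewrite mxE in_itv /= ltr_norml => /andP[h1 h2]; apply/andP; split; lra.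
apply: (@countable_bigcupT_measurable _ _ ('rV[rat]_d * rat)%type F); first exact: countableP.
move=> qs; rewrite /F; case: pselect => ?; [exact: meas_box|exact: measurable0].
Qed.

Lemma meas_lip (F : 'rV[R]_d -> R) (C : R) :
  (forall u v, `|F u - F v| <= C * enorm (u - v)) ->
  measurable_fun setT (fun w => F (eps w)).
Proof.
move=> HF.
apply: (measurability _ (measurable_realfun.RGenOpens.measurableE R)).
move=> _ [_ [a [b ->]] <-]; rewrite setTI.
have -> : (fun w => F (eps w)) @^-1` `]a, b[%classic = eps @^-1` (F @^-1` `]a, b[%classic) by [].
apply: meas_open => p /=; rewrite in_itv /= => /andP[ap pb].
set r := Num.min (F p - a) (b - F p).
have r0 : 0 < r by rewrite lt_min !subr_gt0 ap pb.
set e := r / ((`|C| + 1) * (d%:R + 1)).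
have Cd : 0 < (`|C| + 1) * (d%:R + 1) by apply: mulr_gt0; apply: ltr_wpDl.
have e0 : 0 < e by apply: divr_gt0.
exists e => // u hu.
have hs : \sum_(j < d) `|u 0 j - p 0 j| <= d%:R * e.
  rewrite mulr_natl -[X in _ <= e *+ X](card_ord d) -sumr_const; apply: ler_sum => j _.
  by have := hu j; move=> /ltW.
have h1 : `|F u - F p| <= `|C| * (d%:R * e).
  apply: (le_trans (HF u p)); apply: (le_trans (ler_wpM2r (enorm_ge0 _) (ler_norm C))).
  apply: ler_wpM2l => //; apply: (le_trans (enorm_le_abs _)).
  by apply: (le_trans _ hs); apply: ler_sum => j _; rewrite !mxE.
have h2 : `|C| * (d%:R * e) < r.
  have -> : r = (`|C| + 1) * (d%:R + 1) * e by rewrite /e mulrC divfK // gt_eqF.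
  have hC := normr_ge0 C; have hd : 0 <= (d%:R : R) by exact: ler0n.
  rewrite mulrA; rewrite ltr_pM2r //; nra.
move: h1; rewrite ler_norml => /andP[h3 h4].
rewrite in_itv /=.
have hr1 : r <= F p - a by rewrite /r ge_min lexx.
have hr2 : r <= b - F p by rewrite /r ge_min lexx orbT.
apply/andP; split; lra.
Qed.

Lemma mx_entry_le (v : 'rV[R]_d) j : `|v 0 j| <= `|v|.
Proof.
rewrite [X in _ <= X]/Num.norm /= mx_normrE.
exact: (le_bigmax _ (fun ij : 'I_1 * 'I_d => `|v ij.1 ij.2|) (0, j)).
Qed.

Hypothesis HK : exists K : set 'rV[R]_d, compact K /\ {ae P, forall w, K (eps w)}.

Lemma int_lip (F : 'rV[R]_d -> R) (C : R) :
  (forall u v, `|F u - F v| <= C * enorm (u - v)) ->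
  P.-integrable setT (EFin \o (fun w => F (eps w))).
Proof.
move=> HF; have mF := @meas_lip F C HF.
have [K [Kc Kae]] := HK.
have [M [_ HM]] := compact_bounded Kc.
set M1 := Num.max M 0 + 1.
have M10 : 0 <= M1 by rewrite /M1; apply: addr_ge0 => //; rewrite le_max lexx orbT.
have hB : forall v, K v -> `|v| <= M1.
  move=> v Kv; apply: (HM M1) => //; rewrite /M1.
  by apply: (le_lt_trans (y := Num.max M 0)); [rewrite le_max lexx | rewrite ltrDl].
set Bd := `|F 0| + `|C| * (d%:R * M1).
have bound : forall v, K v -> `|F v| <= Bd.
  move=> v Kv.
  have e1 : enorm v <= d%:R * M1.
    apply: (le_trans (enorm_le_abs _)).
    rewrite mulr_natl -[X in _ <= M1 *+ X](card_ord d) -sumr_const.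
    by apply: ler_sum => j _; apply: (le_trans (mx_entry_le v j)); exact: hB.
  have := HF v 0; rewrite subr0 => h.
  have h2 : C * enorm v <= `|C| * (d%:R * M1).
    apply: (le_trans (ler_wpM2r (enorm_ge0 _) (ler_norm C))).
    by apply: ler_wpM2l.
  have := ler_normlW h; rewrite -[F v](subrK (F 0)) => h3.
  apply: (le_trans (ler_normD _ _)); rewrite /Bd addrC; apply: lerD => //.
  exact: (le_trans h).
apply/integrableP; split; first exact/measurable_EFinP.
have Bd0 : 0 <= Bd by rewrite /Bd; apply: addr_ge0 => //; apply: mulr_ge0 => //; apply: mulr_ge0.
apply: (le_lt_trans (@integral_le_bound _ _ _ _ _ _ Bd%:E _ _ _ _)) => //.
- by apply: measurableT_comp => //; exact/measurable_EFinP.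
- apply: filterS Kae => w Kw _ /=; rewrite lee_fin; exact: bound.
- have hP := probability_setT P. set x := (X in (_ * X < _)%E). have -> : x = 1%E by rewrite /x -hP. by rewrite mule1 ltry.
Qed.

End Meas.

Section ExL.
Context {R : realType} (dT : measure_display) (T : measurableType dT)
  (P : probability T R).
Local Notation int f := (P.-integrable setT (EFin \o f)).

Lemma int_add (f g : T -> R) : int f -> int g -> int (fun w => f w + g w).
Proof.
move=> hf hg.
have -> : EFin \o (fun w => f w + g w) = (EFin \o f) \+ (EFin \o g).
  by apply: funext => w /=; rewrite EFinD.
exact: integrableD.
Qed.

Lemma int_scale (c : R) (f : T -> R) : int f -> int (fun w => c * f w).
Proof.
move=> hf.
have -> : EFin \o (fun w => c * f w) = (fun w => (c%:E * (EFin \o f) w)%E).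
  by apply: funext => w /=; rewrite EFinM.
exact: integrableZl.
Qed.

Lemma int_sub (f g : T -> R) : int f -> int g -> int (fun w => f w - g w).
Proof.
move=> hf hg; apply: int_add => //.
have -> : (fun w => - g w) = (fun w => -1 * g w) by apply: funext => w; rewrite mulN1r.
exact: int_scale.
Qed.

Lemma int_sum k (f : 'I_k -> T -> R) : (forall j, int (f j)) ->
  int (fun w => \sum_(j < k) f j w).
Proof.
move=> hf.
have -> : EFin \o (fun w => \sum_(j < k) f j w) = (fun w => \sum_(j < k) (EFin \o f j) w).
  by apply: funext => w /=; rewrite -sumEFin.
by apply: integrable_sum => // j _; exact: hf.
Qed.

Lemma Ex_add (f g : T -> R) : int f -> int g ->
  Ex P (fun w => f w + g w) = Ex P f + Ex P g.
Proof. by move=> hf hg; rewrite /Ex RintegralD. Qed.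

Lemma Ex_sub (f g : T -> R) : int f -> int g ->
  Ex P (fun w => f w - g w) = Ex P f - Ex P g.
Proof. by move=> hf hg; rewrite /Ex RintegralB. Qed.

Lemma Ex_scale (c : R) (f : T -> R) : int f -> Ex P (fun w => c * f w) = c * Ex P f.
Proof. by move=> hf; rewrite /Ex RintegralZl. Qed.

Lemma Ex_cst (c : R) : Ex P (fun _ => c) = c.
Proof.
rewrite /Ex Rintegral_cst //.
have hP := probability_setT P. set x := (X in c * fine X).
have -> : x = 1%E by rewrite /x -hP.
by rewrite mulr1.
Qed.

Lemma Ex_le (f g : T -> R) : int f -> int g -> (forall w, f w <= g w) -> Ex P f <= Ex P g.
Proof. by move=> hf hg hfg; apply: le_Rintegral => // w _; exact: hfg. Qed.

Lemma Ex_norm (f : T -> R) : int f -> `|Ex P f| <= Ex P (fun w => `|f w|).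
Proof. by move=> hf; apply: le_normr_Rintegral. Qed.

Lemma int_norm (f : T -> R) : int f -> int (fun w => `|f w|).
Proof. by move=> hf; have := integrable_norm hf. Qed.

Lemma Ex_sum k (f : 'I_k -> T -> R) : (forall j, int (f j)) ->
  Ex P (fun w => \sum_(j < k) f j w) = \sum_(j < k) Ex P (f j).
Proof.
move=> hf; rewrite /Ex.
elim: k f hf => [|k IH] f hf.
  rewrite big_ord0; under eq_Rintegral => w _ do rewrite big_ord0.
  by rewrite Rintegral_cst // mul0r.
rewrite big_ord_recl; under eq_Rintegral => w _ do rewrite big_ord_recl.
rewrite RintegralD //; last by apply: int_sum => j; exact: hf.
by rewrite IH.
Qed.

End ExL.

Section Misc.
Context {R : realType}.

Lemma quad_bound (mu a b : R) : 0 < mu -> 0 <= a -> 0 <= b -> mu * a ^+ 2 <= b * a ->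
  a <= mu^-1 * b.
Proof.
move=> mu0 a0 b0 h.
have [->|an] := eqVneq a 0; first by apply: mulr_ge0 => //; rewrite invr_ge0 ltW.
have ap : 0 < a by rewrite lt_def an a0.
have h1 : mu * a <= b.
  by rewrite -(ler_pM2r ap) -mulrA -expr2.
by rewrite mulrC ler_pdivlMr // mulrC.
Qed.

Lemma no_idx_enorm0 k : ~~ (0 < k)%N -> forall v : 'rV[R]_k, enorm v = 0.
Proof.
move=> hk v; rewrite /enorm /dotv big1 ?sqrtr0 // => j _.
have hk0 : (k <= 0)%N by rewrite leqNgt.
by have := leq_trans (ltn_ord j) hk0.
Qed.

Lemma enorm_mulmx n d (u : 'rV[R]_n) (B : 'M[R]_(n, d)) :
  enorm (u *m B) <= enorm u * \sum_(k < d) \sum_(i < n) `|B i k|.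
Proof.
apply: (le_trans (enorm_le_abs _)); rewrite mulr_sumr; apply: ler_sum => k _.
rewrite mxE; apply: (le_trans (ler_norm_sum _ _ _)); rewrite mulr_sumr.
apply: ler_sum => i _; rewrite normrM; apply: ler_wpM2r => //; exact: enorm_ge_abs.
Qed.

Lemma sup_argmax m (Y : set 'rV[R]_m) (F : 'rV[R]_m -> R) y :
  is_argmax Y F y -> sup [set F y' | y' in Y] = F y.
Proof.
move=> [Yy Hy]; apply/le_anti/andP; split.
  by apply: ge_sup; [exists (F y), y | move=> _ [y' Yy' <-]; exact: Hy].
apply: ub_le_sup; last by exists y.
by exists (F y) => _ [y' Yy' <-]; exact: Hy.
Qed.

End Misc.

Lemma enormB_le {R : realType} {k} (u v : 'rV[R]_k) : enorm (u - v) <= enorm u + enorm v.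
Proof. by apply: (le_trans (enormD u (- v))); rewrite enormN. Qed.

Theorem mainTheorem5 (R : realType) (n m d : nat)
  (l : 'rV[R]_n -> 'rV[R]_m -> 'rV[R]_d -> R) (psi : 'rV[R]_n -> 'rV[R]_d)
  (Y : set 'rV[R]_m) (ell1 L1 ell0 L0 mu : R)
  (dT : measure_display) (T : measurableType dT) (P : probability T R)
  (eps : T -> 'rV[R]_d) :
  smooth_l l ell1 -> lipschitz_l l L1 ->
  twice_differentiable psi -> smooth_psi psi ell0 -> lipschitz_psi psi L0 ->
  Y !=set0 -> closed Y -> convex_set Y -> bounded_set Y ->
  0 < mu -> strongly_concave_l l Y mu ->
  random_vector_cs0 P eps ->
  forall (xhat : 'rV[R]_n) (delta : R) (N : nat)
         (xs : 'I_N -> 'rV[R]_n) (es : 'I_N -> 'rV[R]_d)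
         (B0 : 'M[R]_(1, d)) (B1 : 'M[R]_(n, d)),
  0 < delta -> (0 < N)%N ->
  (forall i, eball xhat delta (xs i)) ->
  is_lsq psi xs es B0 B1 ->
  forall x : 'rV[R]_n, eball xhat delta x ->
  forall ystar ys yk : 'rV[R]_m,
    is_argmax Y (Lpop l psi P eps x) ystar ->
    is_argmax Y (Ls l psi es x) ys ->
    is_argmax Y (Lk l psi xs es B0 B1 x) yk ->
  [/\ enorm (ystar - ys) <= mu^-1 * enorm (xi l psi es P eps x ystar),
      enorm (yk - ys) <= 2 * ell1 / mu * Ek psi B0 B1 xhat delta
    & `|Phi l psi Y P eps x - Phik l psi Y xs es B0 B1 x|
        <= `|tau l psi es P eps x ystar|
           + L1 / mu * enorm (xi l psi es P eps x ystar)
           + 2 * L1 * (1 + ell1 / mu) * Ek psi B0 B1 xhat delta].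
Proof.
move=> [Hd Hg] Hlip _ _ Hlp _ _ cY _ mu0 Hsc [Hm [HK _]]
  xhat delta N xs es B0 B1 delta0 N0 Hxs _ x Hx ystar ys yk Hstar Hys Hyk.
set c0 := Num.max ell1 0.
have c0ge : 0 <= c0 by rewrite le_max lexx orbT.
have ell1c0 : ell1 <= c0 by rewrite le_max lexx.
have HLy : forall x0 z y y', enorm (gradY l x0 y z - gradY l x0 y' z) <= c0 * enorm (y - y').
  move=> x0 z y y'; have := Hg x0 y z x0 y' z; rewrite !subrr enorm3_0y0 => h.
  apply: (le_trans (enorm3_mid _ _ _)); apply: (le_trans h).
  exact: (ler_wpM2r (enorm_ge0 _) ell1c0).
have HLz : forall x0 y z z', enorm (gradY l x0 y z - gradY l x0 y z') <= ell1 * enorm (z - z').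
  move=> x0 y z z'; have := Hg x0 y z x0 y z'; rewrite !subrr enorm3_00z => h.
  by apply: (le_trans (enorm3_mid _ _ _)); exact: h.
have Hly : forall x0 y y' z, `|l x0 y z - l x0 y' z| <= L1 * enorm (y - y').
  by move=> x0 y y' z; have := Hlip x0 y z x0 y' z; rewrite !subrr enorm3_0y0.
have Hlz : forall x0 y z z', `|l x0 y z - l x0 y z'| <= L1 * enorm (z - z').
  by move=> x0 y z z'; have := Hlip x0 y z x0 y z'; rewrite !subrr enorm3_00z.
have MVz : forall z y h t, 0 <= t ->
    `|l x (y + t *: h) z - l x y z - t * dotv (gradY l x y z) h| <= c0 * t ^+ 2 * enorm h ^+ 2.
  by move=> z; apply: (@mvt_bound _ _ _ _ l Hd x z c0 c0ge) => y y'; exact: HLy.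
have dz : forall u v : 'rV[R]_d, (psi x + u) - (psi x + v) = u - v.
  by move=> u v; rewrite opprD addrACA subrr add0r.
set SB := \sum_(k < d) \sum_(i < n) `|B1 i k|.
have SB0 : 0 <= SB by apply: sumr_ge0 => k _; apply: sumr_ge0 => i _.
set Ekv := Ek psi B0 B1 xhat delta.
have Ek_bnd : has_ubound [set enorm (psi z - z *m B1 - B0) | z in eball xhat delta].
  exists (`|L0| * delta + enorm (psi xhat) + (delta + enorm xhat) * SB + enorm B0).
  move=> _ [z Bz <-]; rewrite /eball /= in Bz.
  apply: (le_trans (enormB_le _ _)); apply: lerD => //.
  apply: (le_trans (enormB_le _ _)); apply: lerD; last first.
    apply: (le_trans (enorm_mulmx _ _ _ _)); apply: ler_wpM2r => //.
    rewrite -[z](subrK xhat); apply: (le_trans (enormD _ _)); exact: lerD.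
  rewrite -[psi z](subrK (psi xhat)); apply: (le_trans (enormD _ _)); apply: lerD => //.
  apply: (le_trans (Hlp z xhat)); apply: (le_trans (ler_wpM2r (enorm_ge0 _) (ler_norm L0))).
  exact: ler_wpM2l.
have Ek_ub : forall z, eball xhat delta z -> enorm (psi z - z *m B1 - B0) <= Ekv.
  by move=> z Bz; apply: ub_le_sup Ek_bnd _ _; exists z.
have xhatB : eball xhat delta xhat by rewrite /eball /= subrr enorm0 ltW.
have Ek_ge0 : 0 <= Ekv by apply: (le_trans (enorm_ge0 _) (Ek_ub _ xhatB)).
have EkZ : (forall v : 'rV[R]_d, enorm v = 0) -> Ekv = 0.
  move=> h0; apply/le_anti/andP; split => //.
  apply: ge_sup; first by exists (enorm (psi xhat - xhat *m B1 - B0)), xhat.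
  by move=> _ [z _ <-]; rewrite h0.
pose zs := fun i : 'I_N => psi x + es i.
pose zk := fun i : 'I_N => mk B0 B1 x (resid psi xs es B0 B1 i).
pose fs := fun (i : 'I_N) (y : 'rV[R]_m) => l x y (zs i).
pose gs := fun (i : 'I_N) (y : 'rV[R]_m) => gradY l x y (zs i).
pose fk := fun (i : 'I_N) (y : 'rV[R]_m) => l x y (zk i).
pose gk := fun (i : 'I_N) (y : 'rV[R]_m) => gradY l x y (zk i).
have LsE : Ls l psi es x = avgF m N fs by [].
have LkE : Lk l psi xs es B0 B1 x = avgF m N fk by [].
rewrite LsE in Hys; rewrite LkE in Hyk.
have MVs := @avg_MV _ m N fs gs N0 c0 (fun i => MVz (zs i)).
have MVk := @avg_MV _ m N fk gk N0 c0 (fun i => MVz (zk i)).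
have SCs := @avg_SC _ m N fs N0 Y mu (fun i => Hsc x (zs i)).
have SCk := @avg_SC _ m N fk N0 Y mu (fun i => Hsc x (zk i)).
pose Gp := fun y h => Ex P (fun w => dotv (gradY l x y (psi x + eps w)) h).
have int_l : forall y, P.-integrable setT (EFin \o (fun w => l x y (psi x + eps w))).
  move=> y; apply: (@int_lip _ _ _ P _ eps Hm HK (fun v => l x y (psi x + v)) L1).
  by move=> u v; rewrite -dz; exact: Hlz.
have int_dot : forall y h, P.-integrable setT
    (EFin \o (fun w => dotv (gradY l x y (psi x + eps w)) h)).
  move=> y h; apply: (@int_lip _ _ _ P _ eps Hm HK
     (fun v => dotv (gradY l x y (psi x + v)) h) (ell1 * enorm h)).
  move=> u v; rewrite -dotvBl; apply: (le_trans (CSabs _ _)).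
  rewrite mulrAC; apply: ler_wpM2r; first exact: enorm_ge0.
  by rewrite -dz; exact: HLz.
have int_c : forall c : R, P.-integrable setT (EFin \o (fun _ : T => c)).
  move=> c; apply: (@int_lip _ _ _ P _ eps Hm HK (fun _ => c) 0).
  by move=> u v; rewrite subrr normr0 mul0r.
have MVp : forall y h t, 0 <= t ->
    `|Lpop l psi P eps x (y + t *: h) - Lpop l psi P eps x y - t * Gp y h|
      <= c0 * t ^+ 2 * enorm h ^+ 2.
  move=> y h t t0.
  have i1 := int_l (y + t *: h); have i2 := int_l y.
  have i3 := @int_scale _ _ _ P t _ (int_dot y h).
  have i12 := @int_sub _ _ _ P _ _ i1 i2.
  rewrite /Lpop /Gp -(@Ex_scale _ _ _ P t _ (int_dot y h)) -(@Ex_sub _ _ _ P _ _ i1 i2).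
  rewrite -(@Ex_sub _ _ _ P _ _ i12 i3).
  have ia := @int_sub _ _ _ P _ _ i12 i3.
  apply: (le_trans (@Ex_norm _ _ _ P _ ia)).
  rewrite -[X in _ <= X](@Ex_cst _ _ _ P); apply: Ex_le => //; first exact: int_norm.
  move=> w; exact: MVz.
have a1 := @opt_sc _ m Y (avgF m N fs) (avgG m N gs) c0 mu cY MVs SCs ys ystar Hys Hstar.1.
have a2 := @opt_first _ m Y (Lpop l psi P eps x) Gp c0 cY MVp ystar ys Hstar Hys.1.
have intg : forall j : 'I_m,
    P.-integrable setT (EFin \o (fun w => gradY l x ystar (psi x + eps w) 0 j)).
  move=> j; apply: (@int_lip _ _ _ P _ eps Hm HK (fun v => gradY l x ystar (psi x + v) 0 j) ell1).
  move=> u v; have := enorm_ge_abs (gradY l x ystar (psi x + u) - gradY l x ystar (psi x + v)) j.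
  rewrite !mxE => h1; apply: (le_trans h1); rewrite -dz; exact: HLz.
have ExvE : forall h, dotv (Exv P (fun w => gradY l x ystar (psi x + eps w))) h = Gp ystar h.
  move=> h; rewrite /Gp /dotv.
  have intj : forall j : 'I_m, P.-integrable setT
      (EFin \o (fun w => gradY l x ystar (psi x + eps w) 0 j * h 0 j)).
    move=> j; have -> : (fun w => gradY l x ystar (psi x + eps w) 0 j * h 0 j) =
                       (fun w => h 0 j * gradY l x ystar (psi x + eps w) 0 j).
      by apply: funext => w; rewrite mulrC.
    exact: int_scale.
  rewrite (@Ex_sum _ _ _ P m (fun j w => gradY l x ystar (psi x + eps w) 0 j * h 0 j) intj).
  apply: eq_bigr => j _; rewrite mxE.
  have -> : (fun w => gradY l x ystar (psi x + eps w) 0 j * h 0 j) =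
            (fun w => h 0 j * gradY l x ystar (psi x + eps w) 0 j).
    by apply: funext => w; rewrite mulrC.
  by rewrite (@Ex_scale _ _ _ P (h 0 j) _ (intg j)) mulrC.
set xiv := xi l psi es P eps x ystar.
have dxiE : forall h, dotv xiv h = avgG m N gs ystar h - Gp ystar h.
  by move=> h; rewrite /xiv /xi dotvBl dotvZl dotv_suml ExvE.
have ha : enorm (ystar - ys) <= mu^-1 * enorm xiv.
  rewrite enormB; apply: quad_bound => //; [exact: enorm_ge0 | exact: enorm_ge0 |].
  have := CS xiv (ys - ystar); rewrite dxiE => h1.
  rewrite mulrC; lra.
have zdiff : forall i, enorm (zk i - zs i) <= 2 * Ekv.
  move=> i.
  have -> : zk i - zs i = (psi (xs i) - xs i *m B1 - B0) - (psi x - x *m B1 - B0).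
    rewrite /zk /zs /mk /resid /omega /=.
    by apply/rowP => j; rewrite !mxE; ring.
  apply: (le_trans (enormB_le _ _)).
  have -> : 2 * Ekv = Ekv + Ekv by ring.
  by apply: lerD; [exact: Ek_ub | exact: Ek_ub].
have ell1_case : 0 <= ell1 \/ (forall v : 'rV[R]_d, enorm v = 0).
  case: (boolP (0 < d)%N) => hd; last by right; exact: no_idx_enorm0.
  left; set j := Ordinal hd.
  have := Hg x ystar (psi x) x ystar (psi x + delta_mx 0 j).
  rewrite !subrr opprD addrA subrr add0r enorm3_00z enormN enorm_delta mulr1.
  by apply: le_trans; exact: sqrtr_ge0.
have gbound : forall i, enorm (gk i ys - gs i ys) <= ell1 * (2 * Ekv).
  move=> i; have h := HLz x ys (zk i) (zs i).
  case: ell1_case => [e0|h0].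
    by apply: (le_trans h); apply: ler_wpM2l.
  by rewrite (EkZ h0) mulr0 mulr0; move: h; rewrite h0 mulr0.
have b1 := @opt_sc _ m Y (avgF m N fk) (avgG m N gk) c0 mu cY MVk SCk yk ys Hyk Hys.1.
have b2 := @opt_first _ m Y (avgF m N fs) (avgG m N gs) c0 cY MVs ys yk Hys Hyk.1.
have bdiff : forall h, avgG m N gk ys h - avgG m N gs ys h <= ell1 * (2 * Ekv) * enorm h.
  move=> h; rewrite /avgG -mulrBr -sumrB.
  rewrite -[X in _ <= X](@avg_const _ N N0 (ell1 * (2 * Ekv) * enorm h)).
  apply: ler_wpM2l; first by rewrite invr_ge0 ler0n.
  apply: ler_sum => i _; rewrite -dotvBl; apply: (le_trans (CS _ _)).
  exact: (ler_wpM2r (enorm_ge0 _) (gbound i)).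
have bnn : 0 <= ell1 * (2 * Ekv) := le_trans (enorm_ge0 _) (gbound (Ordinal N0)).
have hb : enorm (yk - ys) <= 2 * ell1 / mu * Ekv.
  have -> : 2 * ell1 / mu * Ekv = mu^-1 * (ell1 * (2 * Ekv)) by ring.
  apply: quad_bound => //; first exact: enorm_ge0.
  have := bdiff (yk - ys); rewrite mulrC; lra.
have PhiE : Phi l psi Y P eps x = Lpop l psi P eps x ystar.
  by rewrite /Phi (sup_argmax _ _ _ _ Hstar).
have PhikE : Phik l psi Y xs es B0 B1 x = avgF m N fk yk.
  by rewrite /Phik LkE (sup_argmax _ _ _ _ Hyk).
have LsL : forall a b, `|avgF m N fs a - avgF m N fs b| <= L1 * enorm (a - b).
  move=> a b; rewrite /avgF -mulrBr -sumrB normrM ger0_norm; last by rewrite invr_ge0 ler0n.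
  rewrite -[X in _ <= X](@avg_const _ N N0 (L1 * enorm (a - b))).
  apply: ler_wpM2l; first by rewrite invr_ge0 ler0n.
  apply: (le_trans (ler_norm_sum _ _ _)); apply: ler_sum => i _; exact: Hly.
have L1_case : 0 <= L1 \/ ((forall v : 'rV[R]_m, enorm v = 0) /\ (forall v : 'rV[R]_d, enorm v = 0)).
  case: (boolP (0 < m)%N) => hm.
    left; set j := Ordinal hm.
    have := Hlip x ystar (psi x) x (ystar + delta_mx 0 j) (psi x).
    rewrite !subrr opprD addrA subrr add0r enorm3_0y0 enormN enorm_delta mulr1.
    by apply: le_trans.
  case: (boolP (0 < d)%N) => hd.
    left; set j := Ordinal hd.
    have := Hlip x ystar (psi x) x ystar (psi x + delta_mx 0 j).
    rewrite !subrr opprD addrA subrr add0r enorm3_00z enormN enorm_delta mulr1.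
    by apply: le_trans.
  by right; split; exact: no_idx_enorm0.
have LsLk : `|avgF m N fs yk - avgF m N fk yk| <= L1 * (2 * Ekv).
  rewrite /avgF -mulrBr -sumrB normrM ger0_norm; last by rewrite invr_ge0 ler0n.
  rewrite -[X in _ <= X](@avg_const _ N N0 (L1 * (2 * Ekv))).
  apply: ler_wpM2l; first by rewrite invr_ge0 ler0n.
  apply: (le_trans (ler_norm_sum _ _ _)); apply: ler_sum => i _.
  apply: (le_trans (Hlz x yk (zs i) (zk i))); rewrite enormB.
  case: L1_case => [L0'|[_ h0]]; first exact: ler_wpM2l.
  by rewrite h0 (EkZ h0) !mulr0.
rewrite PhiE PhikE /tau LsE.
set A := Lpop l psi P eps x ystar.
set Bs := avgF m N fs ystar; set Cs := avgF m N fs ys; set Ds := avgF m N fs yk.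
set Fk := avgF m N fk yk.
have t1 : `|A - Fk| <= `|A - Bs| + `|Bs - Cs| + `|Cs - Ds| + `|Ds - Fk|.
  have -> : A - Fk = (A - Bs) + (Bs - Cs) + (Cs - Ds) + (Ds - Fk) by ring.
  apply: (le_trans (ler_normD _ _)); apply: lerD => //.
  apply: (le_trans (ler_normD _ _)); apply: lerD => //.
  exact: ler_normD.
have u2 := LsL ystar ys; have u3 := LsL ys yk.
split => //.
case: L1_case => [L0'|[hm0 hd0]].
  have w2 : L1 * enorm (ystar - ys) <= L1 * (mu^-1 * enorm xiv) by apply: ler_wpM2l.
  have w3 : L1 * enorm (ys - yk) <= L1 * (2 * ell1 / mu * Ekv).
    by apply: ler_wpM2l => //; rewrite enormB.
  have eq1 : L1 / mu * enorm xiv = L1 * (mu^-1 * enorm xiv) by ring.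
  have eq2 : 2 * L1 * (1 + ell1 / mu) * Ekv = L1 * (2 * ell1 / mu * Ekv) + L1 * (2 * Ekv) by ring.
  rewrite eq1 eq2; lra.
rewrite hm0 mulr0 in u2; rewrite hm0 mulr0 in u3.
rewrite (EkZ hd0) mulr0 in LsLk.
rewrite /xiv hm0 (EkZ hd0) !mulr0 !addr0; lra.
Qed.
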